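(* Let $G$ be a graph with vertices $a,b,c,d$, and let $H$ be any graph. There is perfect pair state transfer between $e_a-e_b$ and $e_c-e_d$ in $G$ if and only if there is perfect pair state transfer between $e_a-e_b$ and $e_c-e_d$ in the join of $G$ and $H$.
   Context: All graphs are finite and simple. The join of graphs $G_1,G_2$ has vertex set $V(G_1)\cup V(G_2)$ (disjoint) and edge set $E(G_1)\cup E(G_2)$ together with all edges having one end in $V(G_1)$ and the other in $V(G_2)$. For a graph $X$ with Laplacian $L=\Delta-A$ ($\Delta$ the degree matrix, $A$ the adjacency matrix), set $U(t)=\exp(itL)$. There is perfect pair state transfer between $e_a-e_b$ and $e_c-e_d$ in $X$ if there exist $t\ge 0$ and $\gamma\in\mathbb{C}$ with $|\gamma|=1$ such that $U(t)(e_a-e_b)=\gamma(e_c-e_d)$, where $e_v$ denotes the standard basis vector of vertex $v$. *)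

(* Defs.v *)
From HB Require Import structures.
From mathcomp Require Import all_boot all_order all_algebra.
From mathcomp Require Import complex.
From mathcomp Require Import all_classical all_reals all_analysis.
Import numFieldNormedType.Exports.

Set Implicit Arguments.
Unset Strict Implicit.
Unset Printing Implicit Defensive.

Import Order.TTheory GRing.Theory Num.Theory.
Local Open Scope ring_scope.
Local Open Scope complex_scope.

Definition simple_graph (n : nat) (adj : rel 'I_n) : Prop :=
  symmetric adj /\ irreflexive adj.

(* Join of G (on 'I_n) and H (on 'I_m): vertex set 'I_(n + m), where
   lshift m v is the copy of vertex v of G and rshift n w that of H. *)
Definition graph_join (n m : nat) (G : rel 'I_n) (H : rel 'I_m) : rel 'I_(n + m) :=
  fun u v =>
    match fintype.split u, fintype.split v with
    | inl x, inl y => G x y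
    | inr x, inr y => H x y
    | _, _ => true
    end.

Section Laplacian.
Variable R : realType.

Definition adj_mx (n : nat) (G : rel 'I_n) : 'M[R[i]]_n :=
  \matrix_(x, y) (G x y)%:R.

Definition deg_mx (n : nat) (G : rel 'I_n) : 'M[R[i]]_n :=
  \matrix_(x, y) ((x == y)%:R * #|[pred z | G x z]|%:R).

Definition laplacian (n : nat) (G : rel 'I_n) : 'M[R[i]]_n :=
  deg_mx G - adj_mx G.

Definition expm (n : nat) (A : 'M[R[i]]_n) : 'M[R[i]]_n :=
  limn (fun N : nat => \sum_(k < N) (k`!%:R)^-1 *: A ^+ k).

Definition transition (n : nat) (G : rel 'I_n) (t : R) : 'M[R[i]]_n :=
  expm ((t%:C * 'i) *: laplacian G).

Definition evec (n : nat) (v : 'I_n) : 'cV[R[i]]_n := delta_mx v 0.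

Definition pair_pst (n : nat) (G : rel 'I_n) (a b c d : 'I_n) : Prop :=
  exists t : R, 0 <= t /\
    exists gamma : R[i], `|gamma| = 1 /\
      transition G t *m (evec a - evec b) = gamma *: (evec c - evec d).

End Laplacian.

(* Main.v *)
Require Import Defs.
From HB Require Import structures.
From mathcomp Require Import all_boot all_order all_algebra.
From mathcomp Require Import complex.
From mathcomp Require Import all_classical all_reals all_analysis.
From mathcomp Require Import ring lra.
Import numFieldTopology.Exports numFieldNormedType.Exports.
Set Implicit Arguments.
Unset Strict Implicit.
Unset Printing Implicit Defensive.
Import Order.TTheory GRing.Theory Num.Theory.
Local Open Scope ring_scope.
Local Open Scope classical_set_scope.
Local Open Scope complex_scope.
Local Open Scope ring_scope.



Section CBasics.
Variable R : realType.
Local Notation C := R[i].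
Local Notation CN := (R[i] : numFieldType).

Definition nc (z : C) : R := Num.sqrt (complex.Re z ^+ 2 + complex.Im z ^+ 2).

Lemma normC_nc (z : C) : `|z| = (nc z)%:C.
Proof. by rewrite normc_def. Qed.

Lemma nc_ge0 z : 0 <= nc z.
Proof. exact: sqrtr_ge0. Qed.

Lemma ncD z w : nc (z + w) <= nc z + nc w.
Proof. by rewrite -lecR -!normC_nc rmorphD /= -!normC_nc ler_normD. Qed.

Lemma ncM z w : nc (z * w) = nc z * nc w.
Proof. by apply: complexI; rewrite rmorphM /= -!normC_nc normrM. Qed.

Lemma Re_le z : `|complex.Re z| <= nc z.
Proof.
by rewrite /nc -sqrtr_sqr ler_wsqrtr // lerDl; exact: sqr_ge0.
Qed.

Lemma Im_le z : `|complex.Im z| <= nc z.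
Proof.
by rewrite /nc -sqrtr_sqr ler_wsqrtr // lerDr; exact: sqr_ge0.
Qed.

Lemma ncN z : nc (- z) = nc z.
Proof. by apply: complexI; rewrite -!normC_nc normrN. Qed.

Lemma nc_real (r : R) : nc (r%:C) = `|r|.
Proof. by rewrite /nc /= expr0n /= addr0 sqrtr_sqr. Qed.

Lemma nc_le (z : C) : nc z <= `|complex.Re z| + `|complex.Im z|.
Proof.
rewrite /nc -[X in _ <= X]ger0_norm ?addr_ge0 // -sqrtr_sqr ler_wsqrtr //.
rewrite sqrrD !real_normK ?num_real //.
by rewrite -addrA lerD2l lerDr mulrn_wge0 // mulr_ge0.
Qed.

Lemma cvgC_dist (f : nat -> CN) (l : CN) :
  (forall e : R, 0 < e -> \forall N \near \oo, nc (l - f N) < e) ->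
  f @ \oo --> l.
Proof.
move=> H; apply/cvgrPdist_lt => e.
rewrite ltcE /= => /andP[/eqP Ie Re0].
have -> : e = (complex.Re e)%:C by case: e Ie {Re0} => a b /= ->.
apply: filterS (H _ Re0) => N hN.
by rewrite normC_nc ltcR.
Qed.

Lemma cvgC_ReIm (f : nat -> CN) (a b : R) :
  (fun N => complex.Re (f N)) @ \oo --> a ->
  (fun N => complex.Im (f N)) @ \oo --> b ->
  f @ \oo --> ((a +i* b)%C : CN).
Proof.
move=> /cvgrPdist_lt Ha /cvgrPdist_lt Hb; apply: cvgC_dist => e e0.
have e20 : 0 < e / 2 by rewrite divr_gt0.
near=> N.
apply: (le_lt_trans (nc_le _)).
rewrite (splitr e) ltrD //=.
  by rewrite raddfB /=; near: N; exact: Ha.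
by rewrite raddfB /=; near: N; exact: Hb.
Unshelve. all: by end_near.
Qed.

Lemma cvgC_0 (f : nat -> CN) (r : nat -> R) :
  (forall N, nc (f N) <= r N) -> r @ \oo --> 0 -> f @ \oo --> 0.
Proof.
move=> le /cvgrPdist_lt H; apply: cvgC_dist => e e0.
apply: filterS (H _ e0) => N /=; rewrite !sub0r ncN normrN.
by apply: le_lt_trans; apply: le_trans (le N) (ler_norm _).
Qed.

End CBasics.


Section MxCvg.
Variable R : realType.
Local Notation C := R[i].
Local Notation CN := (R[i] : numFieldType).

Lemma cvg_sumC (I : finType) (f : I -> nat -> CN) (l : I -> CN) :
  (forall i, f i @ \oo --> l i) ->
  (fun N => \sum_i f i N) @ \oo --> (\sum_i l i : CN).
Proof.
move=> H.
suff : forall s : seq I, (fun N => \sum_(i <- s) f i N) @ \oo --> (\sum_(i <- s) l i : CN).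
  by apply.
elim=> [|x s IH].
  rewrite big_nil. have -> : (fun N => \sum_(i <- [::]) f i N) = (fun=> (0:CN)).
    by apply: funext => N; rewrite big_nil.
  exact: cvg_cst.
rewrite big_cons.
have -> : (fun N => \sum_(i <- x :: s) f i N) = (f x + (fun N => \sum_(i <- s) f i N)).
  by apply: funext => N; rewrite big_cons.
exact: (cvgD (H x) IH).
Qed.

Lemma mx_cvg_entries p q (X : nat -> 'M[CN]_(p, q)) (l : 'M[CN]_(p, q)) :
  (forall i j, (fun N => X N i j : CN) @ \oo --> (l i j : CN)) -> X @ \oo --> l.
Proof.
move=> H A [P hP sPA].
have : \forall N \near \oo, forall ij : 'I_p * 'I_q, P ij.1 ij.2 (X N ij.1 ij.2).
  apply: filter_forall => -[i j] /=; exact: (H i j _ (hP i j)).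
apply: filterS => N hN; apply: sPA => i j; exact: (hN (i, j)).
Qed.

Lemma mx_cvg_coord p q (X : nat -> 'M[CN]_(p, q)) (l : 'M[CN]_(p, q)) i j :
  X @ \oo --> l -> (fun N => X N i j : CN) @ \oo --> (l i j : CN).
Proof.
move=> H.
exact: (@continuous_cvg nat _ _ \oo _ X (fun M : 'M[CN]_(p, q) => M i j) l (@coord_continuous CN p q i j l) H).
Qed.

Lemma mulmx_cvg p q r (X : nat -> 'M[CN]_(p, q)) (l : 'M[CN]_(p, q)) (w : 'M[CN]_(q, r)) :
  X @ \oo --> l -> (fun N => X N *m w) @ \oo --> l *m w.
Proof.
move=> H; apply: mx_cvg_entries => i j; rewrite mxE.
under eq_fun do rewrite mxE.
apply: cvg_sumC => k; apply: cvgMr_tmp; exact: mx_cvg_coord.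
Qed.

Lemma col_mx_cvg p p' q (X : nat -> 'M[CN]_(p, q)) (l : 'M[CN]_(p, q)) :
  X @ \oo --> l -> (fun N => col_mx (X N) (0 : 'M[CN]_(p', q))) @ \oo --> col_mx l 0.
Proof.
move=> H; apply: mx_cvg_entries => i j.
rewrite -(splitK i); case: (fintype.split i) => k /=.
  have -> : (fun N => col_mx (X N) 0 (lshift p' k) j : CN) = (fun N => X N k j).
    by apply: funext => N; rewrite col_mxEu.
  rewrite col_mxEu; exact: (@mx_cvg_coord p q X l k j H).
have -> : (fun N => col_mx (X N) (0 : 'M[CN]_(p', q)) (rshift p k) j : CN) = (fun N => 0).
  by apply: funext => N; rewrite col_mxEd mxE.
rewrite col_mxEd mxE; exact: (@cvg_cst CN 0 nat \oo _).
Qed.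

End MxCvg.


Section ExpCvg.
Variable R : realType.
Local Notation C := R[i].
Local Notation CN := (R[i] : numFieldType).

Lemma ReD (x y : C) : complex.Re (x + y) = complex.Re x + complex.Re y.
Proof. by case: x; case: y. Qed.
Lemma ImD (x y : C) : complex.Im (x + y) = complex.Im x + complex.Im y.
Proof. by case: x; case: y. Qed.
Lemma Re_sum (I : Type) (s : seq I) (F : I -> C) :
  complex.Re (\sum_(i <- s) F i) = \sum_(i <- s) complex.Re (F i).
Proof. by apply: (big_morph _ ReD). Qed.
Lemma Im_sum (I : Type) (s : seq I) (F : I -> C) :
  complex.Im (\sum_(i <- s) F i) = \sum_(i <- s) complex.Im (F i).
Proof. by apply: (big_morph _ ImD). Qed.

Lemma nc0 : nc (0 : C) = 0.
Proof. by rewrite (_ : (0 : C) = 0%:C) // nc_real normr0. Qed.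
Lemma nc1 : nc (1 : C) = 1.
Proof. by rewrite (_ : (1 : C) = 1%:C) // nc_real normr1. Qed.
Lemma nc_nat k : nc (k%:R : C) = k%:R.
Proof. by rewrite (_ : (k%:R : C) = (k%:R : R)%:C) ?nc_real ?normr_nat // rmorph_nat. Qed.

Lemma nc_sum (I : Type) (s : seq I) (F : I -> C) :
  nc (\sum_(i <- s) F i) <= \sum_(i <- s) nc (F i).
Proof.
elim: s => [|x s IH]; first by rewrite !big_nil nc0.
rewrite !big_cons; apply: (le_trans (ncD _ _)); exact: lerD.
Qed.

Lemma nc_invfact k : nc ((k`!%:R)^-1 : C) = (k`!%:R)^-1.
Proof.
have -> : ((k`!%:R)^-1 : C) = ((k`!%:R)^-1 : R)%:C by rewrite rmorphV ?unitfE ?pnatr_eq0 -?lt0n ?fact_gt0 // rmorph_nat.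
by rewrite nc_real ger0_norm // invr_ge0.
Qed.

Definition Ksum p (A : 'M[C]_p) : R := \sum_i \sum_j nc (A i j).

Lemma Ksum_ge0 p (A : 'M[C]_p) : 0 <= Ksum A.
Proof. by apply: sumr_ge0 => i _; apply: sumr_ge0 => j _; exact: nc_ge0. Qed.

Lemma row_le_Ksum p (A : 'M[C]_p) i : \sum_j nc (A i j) <= Ksum A.
Proof.
rewrite /Ksum [X in _ <= X](bigD1 i) //= lerDl; apply: sumr_ge0 => i' _; apply: sumr_ge0 => j _; exact: nc_ge0.
Qed.

Lemma pow_bound p (A : 'M[C]_p) k i j : nc ((A ^+ k) i j) <= Ksum A ^+ k.
Proof.
elim: k i j => [|k IH] i j.
  rewrite expr0 mxE; case: (i == j); rewrite ?nc1 ?nc0 //=.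
rewrite exprS -mulmxE mxE; apply: le_trans; first exact: nc_sum.
apply: (@le_trans _ _ (\sum_l nc (A i l) * Ksum A ^+ k)).
  apply: ler_sum => l _; rewrite ncM; apply: ler_wpM2l; [exact: nc_ge0 | exact: IH].
by rewrite -mulr_suml exprS ler_wpM2r ?exprn_ge0 ?Ksum_ge0 // row_le_Ksum.
Qed.

Definition Sx p (A : 'M[C]_p) (N : nat) : 'M[C]_p :=
  \sum_(k < N) (k`!%:R)^-1 *: A ^+ k.

Lemma real_series_cvg (u : nat -> R) (K : R) : 0 <= K ->
  (forall k, `|u k| <= exp_coeff K k) ->
  cvg (series u @ \oo).
Proof.
move=> K0 le; apply: (@normed_cvg _ R^o).
apply: (@series_le_cvg _ _ (exp_coeff K)) => //.
- by move=> k; exact: normr_ge0.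
- by move=> k; exact: exp_coeff_ge0.
- exact: is_cvg_series_exp_coeff.
Qed.

Lemma Sx_entry_cvg p (A : 'M[C]_p) i j :
  cvg ((fun N => Sx A N i j : CN) @ \oo).
Proof.
pose u k := ((k`!%:R)^-1 * (A ^+ k) i j : C).
have bnd k : nc (u k) <= exp_coeff (Ksum A) k.
  rewrite /u ncM nc_invfact exp_coeffE /=.
  by apply: ler_wpM2l; [rewrite invr_ge0 | exact: pow_bound].
have ReC : cvg (series (fun k => complex.Re (u k)) @ \oo).
  apply: (real_series_cvg (Ksum_ge0 A)) => k; exact: le_trans (Re_le _) (bnd k).
have ImC : cvg (series (fun k => complex.Im (u k)) @ \oo).
  apply: (real_series_cvg (Ksum_ge0 A)) => k; exact: le_trans (Im_le _) (bnd k).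
have E N : Sx A N i j = \sum_(0 <= k < N) u k.
  by rewrite /Sx summxE big_mkord; apply: eq_bigr => k _; rewrite mxE.
apply: (cvgP ((limn (series (fun k => complex.Re (u k))) +i* limn (series (fun k => complex.Im (u k)))) : CN)).
apply: cvgC_ReIm.
  have -> : (fun N => complex.Re (Sx A N i j)) = series (fun k => complex.Re (u k)).
    by apply: funext => N; rewrite E Re_sum.
  exact: ReC.
have -> : (fun N => complex.Im (Sx A N i j)) = series (fun k => complex.Im (u k)).
  by apply: funext => N; rewrite E Im_sum.
exact: ImC.
Qed.

Lemma Sx_cvg p (A : 'M[C]_p) :
  Sx A @ \oo --> (\matrix_(i, j) limn (fun N => Sx A N i j : CN) : 'M[CN]_p).
Proof.
apply: mx_cvg_entries => i j; rewrite mxE; exact: Sx_entry_cvg.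
Qed.

End ExpCvg.


Lemma fact_binom (F : numFieldType) (k i : nat) : (i <= k)%N ->
  (k`!%:R)^-1 * 'C(k, i)%:R = (i`!%:R)^-1 * ((k - i)`!%:R)^-1 :> F.
Proof.
move=> ik.
have hk : (k`!%:R : F) != 0 by rewrite pnatr_eq0 -lt0n fact_gt0.
have hi : (i`!%:R : F) != 0 by rewrite pnatr_eq0 -lt0n fact_gt0.
have hki : ((k - i)`!%:R : F) != 0 by rewrite pnatr_eq0 -lt0n fact_gt0.
rewrite -(bin_fact ik) !natrM.
by field; rewrite hi hki /= ?mulf_neq0 ?pnatr_eq0 -?lt0n ?bin_gt0.
Qed.

Lemma tri_reindex (V : zmodType) (F : nat -> nat -> V) (N : nat) :
  \sum_(k < N) \sum_(i < k.+1) F i (k - i)%N =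
  \sum_(l < N) \sum_(j < N - l) F l j.
Proof.
elim: N => [|N IH]; first by rewrite !big_ord0.
rewrite big_ord_recr /= IH [RHS]big_ord_recr /= subSnn big_ord1.
rewrite [in RHS](eq_bigr (fun l : 'I_N => \sum_(j < N - l) F l j + F l (N - l)%N)); last first.
  by move=> l _; rewrite subSn ?big_ord_recr //= ltnW.
by rewrite big_split /= -addrA; congr (_ + _); rewrite big_ord_recr /= subnn.
Qed.

Lemma cauchy_rem (V : zmodType) (F : nat -> nat -> V) (N : nat) :
  \sum_(l < N) \sum_(j < N) F l j - \sum_(k < N) \sum_(i < k.+1) F i (k - i)%N =
  \sum_(l < N) \sum_(j < N | ~~ (j < N - l)%N) F l j.
Proof.
rewrite tri_reindex -sumrB; apply: eq_bigr => l _.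
rewrite (bigID (fun j : 'I_N => (j < N - l)%N)) /=.
rewrite (big_ord_widen N (fun j => F l j)) ?leq_subr //.
by rewrite addrAC subrr add0r.
Qed.


Section Shift.
Variable R : realType.
Local Notation C := R[i].
Local Notation CN := (R[i] : numFieldType).

Lemma expm_eq p (A : 'M[C]_p) : (expm A : 'M[CN]_p) = \matrix_(i, j) limn (fun N => Sx A N i j : CN).
Proof.
have H := @Sx_cvg R p A.
rewrite /expm; apply: cvg_lim; first exact: norm_hausdorff.
exact: H.
Qed.

Lemma expm_cvg p (A : 'M[C]_p) : Sx A @ \oo --> (expm A : 'M[CN]_p).
Proof. by rewrite expm_eq; exact: Sx_cvg. Qed.

Lemma nc_sumP (I : Type) (s : seq I) (P : pred I) (F : I -> C) :
  nc (\sum_(i <- s | P i) F i) <= \sum_(i <- s | P i) nc (F i).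
Proof.
elim/big_rec2: _ => [|i y1 y2 _ IH]; first by rewrite nc0.
apply: le_trans (ncD _ _) _; exact: lerD.
Qed.

Lemma ncX (c : C) k : nc (c ^+ k) = nc c ^+ k.
Proof. by elim: k => [|k IH]; rewrite ?expr0 ?nc1 // !exprS ncM IH. Qed.

Lemma scalar_mx_exp p (c : C) k : (c%:M : 'M[C]_p) ^+ k = (c ^+ k)%:M.
Proof.
elim: k => [|k IH]; first by rewrite !expr0.
by rewrite !exprS IH -mulmxE -scalar_mxM.
Qed.

Definition sN (c : C) (N : nat) : CN := \sum_(k < N) (k`!%:R)^-1 * c ^+ k.
Definition ec (c : C) : CN := limn (sN c).

Lemma sN_Sx (c : C) N : sN c N = Sx (c%:M : 'M[C]_1) N 0 0.
Proof.
rewrite /Sx summxE; apply: eq_bigr => k _.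
by rewrite mxE scalar_mx_exp mxE eqxx mulr1n.
Qed.

Lemma sN_cvg (c : C) : sN c @ \oo --> ec c.
Proof.
have H := @Sx_entry_cvg R 1 (c%:M) 0 0.
have E : sN c = (fun N => Sx (c%:M : 'M[C]_1) N 0 0 : CN) by apply: funext => N; exact: sN_Sx.
by rewrite /ec E.
Qed.

Lemma algCE (x : C) : x *: (1 : C) = x.
Proof. exact: mulr1. Qed.

Definition fS (c : C) p (A : 'M[C]_p) i j (l m : nat) : C :=
  ((l`!%:R)^-1 * c ^+ l) * ((m`!%:R)^-1 * (A ^+ m) i j).

Lemma Sx_shift_entry p (c : C) (A : 'M[C]_p) N i j :
  Sx (c%:M + A) N i j = \sum_(k < N) \sum_(l < k.+1) fS c A i j l (k - l)%N.
Proof.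
rewrite /Sx summxE; apply: eq_bigr => k _.
rewrite mxE addrC exprDn_comm; last first.
  by rewrite /GRing.comm -!mulmxE scalar_mxC.
rewrite summxE mulr_sumr; apply: eq_bigr => l _.
have lk : (l <= k)%N by rewrite -ltnS.
rewrite scalar_mx_exp -mulmxE mul_mx_scalar -[_ *+ 'C(k, l)]scaler_nat !mxE /fS.
have hb := @fact_binom CN k l lk.
rewrite (mulrA _ ('C(k, l)%:R)) hb; ring.
Qed.

End Shift.


Section Shift2.
Variable R : realType.
Local Notation C := R[i].
Local Notation CN := (R[i] : numFieldType).

Definition gR (x y : R) (l m : nat) : R := exp_coeff x l * exp_coeff y m.

Lemma exp_binom (x y : R) k :
  \sum_(l < k.+1) gR x y l (k - l)%N = exp_coeff (x + y) k.
Proof.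
rewrite /gR !exp_coeffE /= addrC exprDn mulr_sumr; apply: eq_bigr => l _.
have lk : (l <= k)%N by rewrite -ltnS.
have hb := @fact_binom R k l lk.
rewrite -[_ *+ 'C(k, l)]mulr_natr.
rewrite [RHS](_ : _ = ((k`!%:R)^-1 * 'C(k, l)%:R) * (x ^+ l * y ^+ (k - l))); last by ring.
rewrite hb; ring.
Qed.

Lemma series_eq (x : R) N : series (exp_coeff x) N = \sum_(k < N) exp_coeff x k.
Proof. by rewrite /series /= big_mkord. Qed.

Lemma rN_cvg (x y : R) :
  (fun N => series (exp_coeff x) N * series (exp_coeff y) N
            - series (exp_coeff (x + y)) N) @ \oo --> (0 : R).
Proof.
have hx : series (exp_coeff x) @ \oo --> expR x := is_cvg_series_exp_coeff x.
have hy : series (exp_coeff y) @ \oo --> expR y := is_cvg_series_exp_coeff y.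
have hxy : series (exp_coeff (x + y)) @ \oo --> expR (x + y) := is_cvg_series_exp_coeff (x + y).
have := cvgB (cvgM hx hy) hxy.
by rewrite -expRD subrr; apply.
Qed.

Lemma prod_entry p (c : C) (A : 'M[C]_p) N i j :
  sN c N * Sx A N i j = \sum_(l < N) \sum_(m < N) fS c A i j l m.
Proof.
rewrite /sN /Sx summxE mulr_suml; apply: eq_bigr => l _.
rewrite mulr_sumr; apply: eq_bigr => m _; by rewrite mxE /fS.
Qed.

Lemma bound_fS p (c : C) (A : 'M[C]_p) i j l m :
  nc (fS c A i j l m) <= gR (nc c) (Ksum A) l m.
Proof.
rewrite /fS /gR !exp_coeffE /= !ncM !nc_invfact ncX.
have h1 : (0 : R) <= (l`!%:R)^-1 by rewrite invr_ge0.
have h2 : (0 : R) <= (m`!%:R)^-1 by rewrite invr_ge0.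
apply: ler_pM.
- by rewrite mulr_ge0 // exprn_ge0 // nc_ge0.
- by rewrite mulr_ge0 // nc_ge0.
- by [].
- by apply: ler_wpM2l => //; exact: pow_bound.
Qed.

Lemma Sx_shift_cvg p (c : C) (A : 'M[C]_p) :
  Sx (c%:M + A) @ \oo --> (ec c *: expm A : 'M[CN]_p).
Proof.
apply: mx_cvg_entries => i j; rewrite mxE.
have h1 : (fun N => sN c N * Sx A N i j : CN) @ \oo --> (ec c * expm A i j : CN).
  apply: cvgM; first exact: sN_cvg.
  exact (@mx_cvg_coord R p p (Sx A) (expm A) i j (@expm_cvg R p A)).
have h2 : (fun N => sN c N * Sx A N i j - Sx (c%:M + A) N i j : CN) @ \oo --> (0 : CN).
  apply: (cvgC_0 _ (rN_cvg (nc c) (Ksum A))) => N.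
  rewrite prod_entry Sx_shift_entry cauchy_rem !series_eq.
  have -> : (\sum_(k < N) exp_coeff (nc c) k) * (\sum_(k < N) exp_coeff (Ksum A) k)
      = \sum_(l < N) \sum_(m < N) gR (nc c) (Ksum A) l m.
    by rewrite mulr_suml; apply: eq_bigr => l _; rewrite mulr_sumr.
  have -> : \sum_(k < N) exp_coeff (nc c + Ksum A) k
      = \sum_(k < N) \sum_(l < k.+1) gR (nc c) (Ksum A) l (k - l)%N.
    by apply: eq_bigr => k _; rewrite exp_binom.
  rewrite cauchy_rem.
  apply: le_trans; first exact: nc_sumP.
  apply: ler_sum => l _; apply: le_trans; first exact: nc_sumP.
  apply: ler_sum => m _; exact: bound_fS.
have E : (fun N => Sx (c%:M + A) N i j : CN) =
    (fun N => sN c N * Sx A N i j) - (fun N => sN c N * Sx A N i j - Sx (c%:M + A) N i j).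
  by apply: funext => N; rewrite opprfctE addrfctE /= opprB addrC subrK.
rewrite E -[X in _ --> X]subr0; exact: cvgB h1 h2.
Qed.

Lemma expm_shift p (c : C) (A : 'M[C]_p) :
  (expm (c%:M + A) : 'M[CN]_p) = ec c *: expm A.
Proof.
have H1 := @expm_cvg R p (c%:M + A).
have H2 := @Sx_shift_cvg p c A.
by rewrite -(cvg_lim (@norm_hausdorff _ _) H1) -(cvg_lim (@norm_hausdorff _ _) H2).
Qed.

End Shift2.


Section Phase.
Variable R : realType.
Local Notation C := R[i].
Local Notation CN := (R[i] : numFieldType).

Lemma Sx0 p N : Sx (0 : 'M[C]_p) N.+1 = 1.
Proof.
rewrite /Sx big_ord_recl /= expr0 fact0 invr1 scale1r big1 ?addr0 // => k _.
by rewrite exprS mul0r scaler0.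
Qed.

Lemma expm0 p : (expm (0 : 'M[C]_p) : 'M[CN]_p) = 1.
Proof.
have H1 := @expm_cvg R p 0.
have H2 : Sx (0 : 'M[C]_p) @ \oo --> (1 : 'M[CN]_p).
  apply: (@cvg_near_cst _ _ (1 : 'M[CN]_p) (Sx 0) \oo _); exists 1%N => // N /= hN.
  by case: N hN => // N _; exact: Sx0.
by rewrite -(cvg_lim (@norm_hausdorff _ _) H1) -(cvg_lim (@norm_hausdorff _ _) H2).
Qed.

Lemma ec_inv (c : C) : ec c * ec (- c) = 1.
Proof.
have E1 := @expm_shift R 1 c ((- c)%:M).
have E2 := @expm_shift R 1 (- c) 0.
rewrite addr0 expm0 in E2.
rewrite E2 -raddfD /= subrr raddf0 expm0 in E1.
have := congr1 (fun M : 'M[C]_1 => M 0 0) E1.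
by rewrite /= !mxE eqxx mulr1n mulr1 => <-.
Qed.

Lemma conj_cvg (f : nat -> CN) (l : CN) :
  f @ \oo --> l -> (fun N => (f N)^*%C : CN) @ \oo --> (l^*%C : CN).
Proof.
move=> /cvgrPdist_lt H; apply/cvgrPdist_lt => e e0.
apply: filterS (H e e0) => N.
by rewrite -rmorphB normcJ.
Qed.

Lemma sN_conj (c : C) N : (sN c N)^*%C = sN (c^*%C) N.
Proof.
rewrite /sN rmorph_sum; apply: eq_bigr => k _.
by rewrite rmorphM rmorphXn fmorphV rmorph_nat.
Qed.

Lemma ec_conj (c : C) : (ec c)^*%C = ec (c^*%C).
Proof.
have H := conj_cvg (@sN_cvg R c).
have E : (fun N => (sN c N)^*%C : CN) = sN (c^*%C) by apply: funext => N; exact: sN_conj.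
rewrite E in H.
have H2 := @sN_cvg R (c^*%C).
by rewrite -(cvg_lim (@norm_hausdorff _ _) H) -(cvg_lim (@norm_hausdorff _ _) H2).
Qed.

Lemma ec_norm (r : R) : `|ec (r%:C * 'i)| = 1.
Proof.
set c := r%:C * 'i.
have hc : c^*%C = - c.
  by apply/eqP; rewrite eq_complex /= !(mulr0, mul0r, mulr1, subr0, addr0, oppr0, add0r) !eqxx.
have h2 : `|ec c| ^+ 2 = 1 by rewrite sqr_normc ec_conj hc ec_inv.
by apply/eqP; rewrite -sqrp_eq1 ?h2.
Qed.

End Phase.


Lemma split_l n m (x : 'I_n) : fintype.split (lshift m x) = inl x.
Proof. exact: (unsplitK (inl _ x)). Qed.
Lemma split_r n m (x : 'I_m) : fintype.split (rshift n x) = inr x.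
Proof. exact: (unsplitK (inr _ x)). Qed.

Lemma deg_join_l n m (G : rel 'I_n) (H : rel 'I_m) (x : 'I_n) :
  #|[pred z | graph_join G H (lshift m x) z]| = (#|[pred z | G x z]| + m)%N.
Proof.
rewrite -!sum1_card (big_split_ord _ _ (fun _ => 1%N)) /=.
rewrite (eq_bigl (fun i => G x i)); last by move=> i; rewrite inE /graph_join !split_l.
rewrite [X in (_ + X)%N](eq_bigl (fun _ => true)); last by move=> i; rewrite inE /graph_join split_l split_r.
rewrite big_const_ord iter_addn_0 mul1n; by congr (_ + _)%N.
Qed.

Section Graph.
Variable R : realType.
Local Notation C := R[i].
Local Notation CN := (R[i] : numFieldType).

Lemma lapE n (G : rel 'I_n) x y :
  laplacian R G x y = (x == y)%:R * #|[pred z | G x z]|%:R - (G x y)%:R.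
Proof. by rewrite !mxE. Qed.

Lemma lap_colsum n (G : rel 'I_n) (hG : symmetric G) y :
  \sum_x laplacian R G x y = 0.
Proof.
under eq_bigr do rewrite lapE.
rewrite sumrB (bigD1 y) //= eqxx mul1r big1 ?addr0; last first.
  by move=> x /negbTE ->; rewrite mul0r.
rewrite -(@sum1_card _ [pred z | G y z]) natr_sum.
apply/eqP; rewrite subr_eq0; apply/eqP.
rewrite big_mkcond /=; apply: eq_bigr => x _; rewrite inE /= (hG x y).
by case: (G y x).
Qed.

Definition sz n (v : 'cV[C]_n) := \sum_i v i 0 = 0.


Lemma sz_scale n (k : C) (v : 'cV[C]_n) : sz v -> sz (k *: v).
Proof. by rewrite /sz => hv; under eq_bigr do rewrite mxE; rewrite -mulr_sumr hv mulr0. Qed.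

Lemma sz_add n (v w : 'cV[C]_n) : sz v -> sz w -> sz (v + w).
Proof. by rewrite /sz => hv hw; under eq_bigr do rewrite mxE; rewrite big_split /= hv hw addr0. Qed.

Lemma sz_L n (G : rel 'I_n) (hG : symmetric G) (v : 'cV[C]_n) :
  sz v -> sz (laplacian R G *m v).
Proof.
move=> _; rewrite /sz; under eq_bigr do rewrite mxE.
rewrite exchange_big /=; apply: big1 => y _.
by rewrite -mulr_suml lap_colsum // mul0r.
Qed.

Lemma sz_B n (G : rel 'I_n) (hG : symmetric G) (m : nat) (s : C) (v : 'cV[C]_n) :
  sz v -> sz ((s *: (laplacian R G + (m%:R : C)%:M)) *m v).
Proof.
move=> hv; rewrite -scalemxAl mulmxDl mul_scalar_mx.
apply: sz_scale; apply: sz_add; [exact: sz_L | exact: sz_scale].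
Qed.

Lemma lapJ_ll n m (G : rel 'I_n) (H : rel 'I_m) x y :
  laplacian R (graph_join G H) (lshift m x) (lshift m y) =
  laplacian R G x y + (x == y)%:R * (m%:R : C).
Proof.
rewrite !lapE deg_join_l eq_lshift /graph_join !split_l natrD; ring.
Qed.

Lemma lapJ_rl n m (G : rel 'I_n) (H : rel 'I_m) z y :
  laplacian R (graph_join G H) (rshift n z) (lshift m y) = -1.
Proof.
by rewrite lapE eq_shift.2 mul0r /graph_join split_r split_l sub0r.
Qed.

Lemma mx0E p q (i : 'I_p) (j : 'I_q) : (0 : 'M[C]_(p, q)) i j = 0.
Proof. by rewrite mxE. Qed.

Lemma join_mul n m (G : rel 'I_n) (H : rel 'I_m) (v : 'cV[C]_n) : sz v ->
  laplacian R (graph_join G H) *m col_mx v (0 : 'cV[C]_m) =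
  col_mx ((laplacian R G + (m%:R : C)%:M) *m v) 0.
Proof.
move=> hv; apply/matrixP => i j; rewrite mxE big_split_ord /=.
under eq_bigr do rewrite col_mxEu.
rewrite [X in _ + X = _]big1 ?addr0; last by move=> k _; rewrite col_mxEd mx0E mulr0.
rewrite -(splitK i); case: (fintype.split i) => x /=.
  rewrite col_mxEu mxE; apply: eq_bigr => y _.
  rewrite lapJ_ll !mxE mulrDl [in RHS]mulrDl; congr (_ + _).
  by case: (x == y); rewrite ?mulr1n ?mulr0n ?mul1r ?mul0r.
rewrite col_mxEd mx0E.
under eq_bigr do rewrite lapJ_rl mulN1r.
by rewrite sumrN (ord1 j) hv oppr0.
Qed.

End Graph.


Section Final.
Variable R : realType.
Local Notation C := R[i].
Local Notation CN := (R[i] : numFieldType).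

Section Join.
Variables (n m : nat) (G : rel 'I_n) (H : rel 'I_m) (hG : symmetric G).
Local Notation LJ := (laplacian R (graph_join G H)).
Local Notation B := (laplacian R G + (m%:R : C)%:M).

Lemma join_mul_s (s : C) (v : 'cV[C]_n) : sz v ->
  (s *: LJ) *m col_mx v (0 : 'cV[C]_m) = col_mx ((s *: B) *m v) 0.
Proof. by move=> hv; rewrite -!scalemxAl join_mul // scale_col_mx scaler0. Qed.

Lemma pow_col (s : C) k (v : 'cV[C]_n) : sz v ->
  (s *: LJ) ^+ k *m col_mx v (0 : 'cV[C]_m) = col_mx ((s *: B) ^+ k *m v) 0.
Proof.
elim: k v => [|k IH] v hv; first by rewrite !expr0 !mul1mx.
rewrite !exprSr -!mulmxE -!mulmxA join_mul_s // IH //; exact: sz_B.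
Qed.

Lemma col_sum N (F : 'I_N -> 'cV[C]_n) :
  \sum_(k < N) col_mx (F k) (0 : 'cV[C]_m) = col_mx (\sum_(k < N) F k) 0.
Proof.
elim/big_rec2: _ => [|k y1 y2 _ ->]; first by rewrite col_mx0.
by rewrite add_col_mx addr0.
Qed.

Lemma Sx_col (s : C) N (v : 'cV[C]_n) : sz v ->
  Sx (s *: LJ) N *m col_mx v (0 : 'cV[C]_m) = col_mx (Sx (s *: B) N *m v) 0.
Proof.
move=> hv; rewrite /Sx !mulmx_suml -col_sum; apply: eq_bigr => k _.
by rewrite -!scalemxAl pow_col // scale_col_mx scaler0.
Qed.

Lemma expm_col (s : C) (v : 'cV[C]_n) : sz v ->
  (expm (s *: LJ) : 'M[CN]_(n + m)) *m col_mx v (0 : 'cV[CN]_m) =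
  col_mx ((expm (s *: B) : 'M[CN]_n) *m v) 0.
Proof.
move=> hv.
have H1 := @mulmx_cvg R _ _ _ (Sx (s *: LJ)) (expm (s *: LJ)) (col_mx v 0) (@expm_cvg R _ (s *: LJ)).
have H2 := @col_mx_cvg R _ m _ _ _ (@mulmx_cvg R _ _ _ (Sx (s *: B)) (expm (s *: B)) v (@expm_cvg R _ (s *: B))).
have E : (fun N => Sx (s *: LJ) N *m col_mx v 0) = (fun N => col_mx (Sx (s *: B) N *m v) 0).
  by apply: funext => N; exact: Sx_col.
rewrite E in H1.
by rewrite -(cvg_lim (@norm_hausdorff _ _) H1) -(cvg_lim (@norm_hausdorff _ _) H2).
Qed.

End Join.

End Final.


Section Final2.
Variable R : realType.
Local Notation C := R[i].
Local Notation CN := (R[i] : numFieldType).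

Lemma KE n m (G : rel 'I_n) (H : rel 'I_m) (hG : symmetric G) (t : R) (v : 'cV[C]_n) :
  sz v ->
  transition (graph_join G H) t *m col_mx v (0 : 'cV[C]_m) =
  ec ((t * m%:R)%:C * 'i) *: col_mx (transition G t *m v) (0 : 'cV[C]_m).
Proof.
move=> hv; rewrite /transition (expm_col H hG) //.
have -> : (t%:C * 'i) *: (laplacian R G + (m%:R : C)%:M) =
    ((t * m%:R)%:C * 'i)%:M + (t%:C * 'i) *: laplacian R G.
  rewrite scalerDr addrC; congr (_ + _).
  rewrite scale_scalar_mx; congr (_%:M); rewrite rmorphM /= rmorph_nat; ring.
rewrite expm_shift.
by rewrite -scalemxAl scale_col_mx scaler0.
Qed.

Lemma evec_l n m (a : 'I_n) : evec R (lshift m a) = col_mx (evec R a) 0.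
Proof.
apply/matrixP => i j; rewrite -(splitK i); case: (fintype.split i) => k /=.
  by rewrite col_mxEu !mxE eq_lshift.
by rewrite col_mxEd !mxE eq_shift.2.
Qed.

Lemma col_sub n m (x y : 'cV[C]_n) :
  col_mx x (0 : 'cV[C]_m) - col_mx y 0 = col_mx (x - y) 0.
Proof. by rewrite opp_col_mx add_col_mx oppr0 addr0. Qed.

Lemma sum_evec n (x : 'I_n) : \sum_i (evec R x) i 0 = 1.
Proof.
rewrite (bigD1 x) //= big1 ?addr0; first by rewrite mxE !eqxx.
by move=> i hi; rewrite mxE (negbTE hi).
Qed.

Lemma sz_evec n (a b : 'I_n) : sz (evec R a - evec R b).
Proof.
rewrite /sz (eq_bigr (fun i => evec R a i 0 - evec R b i 0)).
  by rewrite sumrB !sum_evec subrr.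
by move=> i _; rewrite !mxE.
Qed.

End Final2.

Theorem mainTheorem2 (R : realType) (n m : nat) (G : rel 'I_n) (H : rel 'I_m)
    (hG : simple_graph G) (hH : simple_graph H) (a b c d : 'I_n) :
  pair_pst R G a b c d <->
  pair_pst R (graph_join G H) (lshift m a) (lshift m b) (lshift m c) (lshift m d).
Proof.
have hGs : symmetric G by case: hG.
split.
- move=> [t [t0 [g [g1 Hg]]]]; exists t; split => //.
  exists (ec ((t * m%:R)%:C * 'i) * g); split.
    by rewrite normrM ec_norm g1 mulr1.
  rewrite !evec_l !col_sub (KE H hGs _ (sz_evec R a b)) Hg -scalerA.
  by rewrite !scale_col_mx !scaler0.
- move=> [t [t0 [g [g1 Hg]]]]; exists t; split => //.
  set e := ec ((t * m%:R)%:C * 'i).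
  have e1 : `|e| = 1 by exact: ec_norm.
  have e0 : e != 0 by rewrite -normr_eq0 e1 oner_eq0.
  exists (g / e); split.
    by rewrite normrM normfV e1 g1 invr1 mulr1.
  move: Hg; rewrite !evec_l !col_sub (KE H hGs _ (sz_evec R a b)) -/e !scale_col_mx !scaler0.
  move=> /eq_col_mx [Hg _].
  have -> : transition G t *m (evec R a - evec R b) =
      e^-1 *: (e *: (transition G t *m (evec R a - evec R b))).
    by rewrite scalerA mulVf // scale1r.
  by rewrite Hg scalerA mulrC.
Qed.
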